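(* Let $\mathcal{X}=\{x_1,\dots,x_n\}$, $\mathcal{X}_{\mathrm{in}}\subseteq\mathcal{X}$ with $n_{\mathrm{in}}$ points, and let $\mathcal{X}_{\mathrm{out}}\subseteq\mathcal{X}_{\mathrm{in}}$ be a random subset of size $n_{\mathrm{out}}$. Let $\mathbf{k}$ be a reproducing kernel generating $K$, i.e. $K=(\mathbf{k}(x_i,x_j))_{i,j=1}^n$. If $p_{\mathrm{in}}-q_{\mathrm{out}}$ is $(K,\nu)$-sub-Gaussian on an event $\mathcal{E}$, then $(\mathbb{P}_{\mathrm{in}}-\mathbb{P}_{\mathrm{out}})\mathbf{k}$ is $(\mathbf{k},\nu)$-sub-Gaussian on $\mathcal{E}$.
   Context: $p_{\mathrm{in},i}=\mathbf{1}\{x_i\in\mathcal{X}_{\mathrm{in}}\}/n_{\mathrm{in}}$, $q_{\mathrm{out},i}=\mathbf{1}\{x_i\in\mathcal{X}_{\mathrm{out}}\}/n_{\mathrm{out}}$. $(\mathbb{P}_{\mathrm{in}}-\mathbb{P}_{\mathrm{out}})\mathbf{k}:=\frac{1}{n_{\mathrm{in}}}\sum_{x\in\mathcal{X}_{\mathrm{in}}}\mathbf{k}(x,\cdot)-\frac1{n_{\mathrm{out}}}\sum_{x\in\mathcal{X}_{\mathrm{out}}}\mathbf{k}(x,\cdot)\in\mathcal{H}_{\mathbf{k}}$ (the RKHS of $\mathbf{k}$). A random $\phi\in\mathcal{H}_{\mathbf{k}}$ is $(\mathbf{k},\nu)$-sub-Gaussian on $\mathcal{E}$ if $\nu>0$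 and $\mathbb{E}[\exp(\langle f,\phi\rangle_{\mathbf{k}})\mathbf{1}_{\mathcal{E}}]\le\exp(\frac{\nu^2}{2}\|f\|_{\mathbf{k}}^2)$ for all $f\in\mathcal{H}_{\mathbf{k}}$. A random $w\in\mathbb{R}^n$ is $(K,\nu)$-sub-Gaussian on $\mathcal{E}$ if $K$ is SPSD, $\nu>0$, and $\mathbb{E}[\exp(u^\top Kw)\mathbf{1}_{\mathcal{E}}]\le\exp(\frac{\nu^2}{2}u^\top Ku)$ for all $u\in\mathbb{R}^n$. *)

(* Defs.v *)
From HB Require Import structures.
From mathcomp Require Import all_boot all_order all_algebra.
From mathcomp Require Import all_classical all_reals all_analysis.
Set Implicit Arguments. Unset Strict Implicit. Unset Printing Implicit Defensive.
Import Order.TTheory GRing.Theory Num.Theory.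
Local Open Scope classical_set_scope.
Local Open Scope ring_scope.

Definition bilin (R : pzRingType) (n : nat) (u : 'cV[R]_n) (K : 'M[R]_n)
  (w : 'cV[R]_n) : R := ((u^T *m K *m w) 0 0).

Definition SPSD (R : realType) (n : nat) (K : 'M[R]_n) : Prop :=
  K^T = K /\ forall u : 'cV[R]_n, 0 <= bilin u K u.

Definition gram (R : realType) (T : Type) (n : nat) (k : T -> T -> R)
  (x : 'I_n -> T) : 'M[R]_n := \matrix_(i, j) k (x i) (x j).

(* (H, inner, ev, kf) is the RKHS of the kernel k on T:
   H is a real inner-product space, complete for the induced norm, whose
   elements are (via the injective linear map ev) functions T -> R,
   containing kf x = k(x, .) and satisfying the reproducing property. *)
Record is_RKHS (R : realType) (T : Type) (k : T -> T -> R) (H : lmodType R)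
  (inner : H -> H -> R) (ev : H -> T -> R) (kf : T -> H) : Prop := {
  inner_linl : forall (a : R) (f g h : H),
      inner (a *: f + g) h = a * inner f h + inner g h;
  inner_sym : forall f g, inner f g = inner g f;
  inner_ge0 : forall f, 0 <= inner f f;
  inner_eq0 : forall f, inner f f = 0 -> f = 0;
  inner_complete : forall u : nat -> H,
      (forall e : R, 0 < e -> exists N : nat, forall m p : nat,
          (N <= m)%N -> (N <= p)%N -> inner (u m - u p) (u m - u p) < e) ->
      exists l : H, forall e : R, 0 < e -> exists N : nat, forall m : nat,
          (N <= m)%N -> inner (u m - l) (u m - l) < e;
  ev_lin : forall (a : R) (f g : H) (t : T),
      ev (a *: f + g) t = a * ev f t + ev g t;
  ev_inj : forall f g, ev f = ev g -> f = g;
  ev_kf : forall t, ev (kf t) = k t;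
  reproducing : forall (f : H) (t : T), inner f (kf t) = ev f t
}.

Definition subgauss_vec (R : realType) (d : measure_display)
  (Omega : measurableType d) (P : probability Omega R) (n : nat)
  (E : set Omega) (K : 'M[R]_n) (nu : R) (w : Omega -> 'cV[R]_n) : Prop :=
  SPSD K /\ 0 < nu /\
  forall u : 'cV[R]_n,
    (\int[P]_(om in E) (expR (bilin u K (w om)))%:E <=
     (expR (nu ^+ 2 / 2 * bilin u K u))%:E)%E.

Definition subgauss_rkhs (R : realType) (d : measure_display)
  (Omega : measurableType d) (P : probability Omega R) (H : lmodType R)
  (inner : H -> H -> R) (E : set Omega) (nu : R) (phi : Omega -> H) : Prop :=
  0 < nu /\
  forall f : H,
    (\int[P]_(om in E) (expR (inner f (phi om)))%:E <=
     (expR (nu ^+ 2 / 2 * inner f f))%:E)%E.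

Definition pq_diff (R : realType) (n : nat) (Xin Xout : {set 'I_n})
  (nout : nat) : 'cV[R]_n :=
  \col_i ((i \in Xin)%:R / (#|Xin|)%:R - (i \in Xout)%:R / nout%:R).

Definition embed_diff (R : realType) (T : Type) (H : lmodType R) (kf : T -> H)
  (n : nat) (x : 'I_n -> T) (Xin Xout : {set 'I_n}) (nout : nat) : H :=
  ((#|Xin|)%:R^-1 *: \sum_(i in Xin) kf (x i))
  - (nout%:R^-1 *: \sum_(i in Xout) kf (x i)).

(* Main.v *)
Require Import Defs.
From HB Require Import structures.
From mathcomp Require Import all_boot all_order all_algebra.
From mathcomp Require Import all_classical all_reals all_analysis.
From mathcomp Require Import lra.
Import Order.TTheory GRing.Theory Num.Theory.
Local Open Scope classical_set_scope.
Local Open Scope ring_scope.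

Theorem lemmaA2 (R : realType) (T : Type) (k : T -> T -> R)
  (H : lmodType R) (inner : H -> H -> R) (ev : H -> T -> R) (kf : T -> H)
  (hH : is_RKHS k inner ev kf)
  (n : nat) (x : 'I_n -> T) (x_inj : injective x)
  (Xin : {set 'I_n}) (nout : nat)
  (d : measure_display) (Omega : measurableType d) (P : probability Omega R)
  (Xout : Omega -> {set 'I_n})
  (hsub : forall om, Xout om \subset Xin)
  (hcard : forall om, #|Xout om| = nout)
  (E : set Omega) (nu : R) :
  subgauss_vec P E (gram k x) nu (fun om => pq_diff R Xin (Xout om) nout) ->
  subgauss_rkhs P inner E nu (fun om => embed_diff kf x Xin (Xout om) nout).
Proof.
move=> [[KT _] [nu0 hw]]; split => // f.
set K := gram k x.
pose G := fun a : 'cV[R]_n => \sum_i a i 0 *: kf (x i).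
have inner0 : forall h, inner 0 h = 0.
  move=> h; have := inner_linl hH 1 0 0 h.
  rewrite scaler0 addr0 mul1r => ?; lra.
have innerSl : forall (I : finType) (Pr : pred I) (a : I -> R) (g : I -> H) h,
    inner (\sum_(i | Pr i) a i *: g i) h = \sum_(i | Pr i) a i * inner (g i) h.
  move=> I Pr a g h; apply: (big_rec2 (fun y1 y2 => inner y2 h = y1)).
    exact: inner0.
  by move=> i y1 y2 _ <-; rewrite (inner_linl hH).
have innerSr : forall (a : 'cV[R]_n) h,
    inner h (G a) = \sum_i a i 0 * inner h (kf (x i)).
  move=> a h; rewrite (inner_sym hH) innerSl; apply: eq_bigr => i _.
  by rewrite (inner_sym hH).
have kk : forall i j, inner (kf (x i)) (kf (x j)) = K i j.
  by move=> i j; rewrite (reproducing hH) (ev_kf hH) /K /gram mxE.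
have bilinE : forall a b : 'cV[R]_n,
    bilin a K b = \sum_i \sum_j a i 0 * b j 0 * K i j.
  move=> a b; rewrite /bilin mxE exchange_big; apply: eq_bigr => j _.
  rewrite mxE mulr_suml; apply: eq_bigr => i _.
  by rewrite !mxE mulrAC.
have GG : forall a b, inner (G a) (G b) = bilin a K b.
  move=> a b; rewrite bilinE innerSl; apply: eq_bigr => i _.
  rewrite innerSr mulr_sumr; apply: eq_bigr => j _.
  by rewrite kk mulrA.
pose v : 'cV[R]_n := \col_j inner f (kf (x j)).
have fG : forall a, inner f (G a) = (v^T *m a) 0 0.
  move=> a; rewrite innerSr mxE; apply: eq_bigr => i _.
  by rewrite !mxE mulrC.
set cK := cokermx K.
have hv : (v^T <= K)%MS.
  rewrite submxE; apply/eqP/matrixP => i j; rewrite [RHS]mxE.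
  pose z : 'cV[R]_n := \col_l cK l j.
  have Kz : bilin z K z = 0.
    rewrite /bilin -mulmxA.
    have -> : K *m z = 0.
      apply/matrixP => a b; rewrite !mxE.
      transitivity ((K *m cK) a j); last by rewrite mulmx_coker mxE.
      rewrite mxE; apply: eq_bigr => l _; by rewrite !mxE.
    by rewrite mulmx0 mxE.
  have Gz : G z = 0 by apply: (inner_eq0 hH); rewrite GG.
  have := fG z; rewrite Gz (inner_sym hH) inner0 ord1.
  move=> ->; rewrite !mxE; apply: eq_bigr => l _; by rewrite !mxE.
set u : 'cV[R]_n := (v^T *m pinvmx K)^T.
have uK : u^T *m K = v^T by rewrite trmxK mulmxKpV.
have bilinw : forall w, bilin u K w = inner f (G w).
  by move=> w; rewrite /bilin uK fG.
have guu : inner (G u) (G u) = inner f (G u) by rewrite GG bilinw.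
have le : inner (G u) (G u) <= inner f f.
  have := inner_ge0 hH (f - G u).
  have linl : forall a b, inner (a - b) (a - b) =
      inner a a - inner a b - inner b a + inner b b.
    move=> a b.
    have Ll : forall p q r, inner (p - q) r = inner p r - inner q r.
      move=> p q r; rewrite -scaleN1r addrC (inner_linl hH) mulN1r; lra.
    rewrite Ll (inner_sym hH a) (inner_sym hH b) !Ll (inner_sym hH b a); lra.
  rewrite linl (inner_sym hH (G u) f) guu; lra.
have GwE : forall om, embed_diff kf x Xin (Xout om) nout
     = G (pq_diff R Xin (Xout om) nout).
  move=> om; rewrite /embed_diff /G /pq_diff.
  symmetry; under eq_bigr => i _ do rewrite mxE scalerBl.
  rewrite sumrB; congr (_ - _); rewrite scaler_sumr [RHS]big_mkcond;
    apply: eq_bigr => i _; case: (i \in _);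
    by rewrite ?mul1r ?mul0r ?scale0r.
have -> : (fun om => (expR (inner f (embed_diff kf x Xin (Xout om) nout)))%:E)
    = (fun om => (expR (bilin u K (pq_diff R Xin (Xout om) nout)))%:E).
  by apply: funext => om; rewrite bilinw GwE.
have h1 := hw u.
have h2 : ((expR (nu ^+ 2 / 2 * bilin u K u))%:E <= (expR (nu ^+ 2 / 2 * inner f f))%:E)%E.
  rewrite lee_fin ler_expR; apply: ler_wpM2l.
    by apply: divr_ge0 => //; rewrite sqr_ge0.
  by rewrite -GG.
exact: (le_trans h1 h2).
Qed.
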